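(* Let $\pi\in S_n$ be a 321-avoiding permutation and let $i_1<i_2<\dots<i_r$ be its excedance locations (the indices $i$ with $\pi(i)>i$). Then the number of fixed points of $\pi$ is: (1) $n$, if $\pi$ is the identity; (2) $i_1-1+\sum_{j=2}^{r}\max\{i_j-\pi(i_{j-1})-1,0\}+n-\pi(i_r)$, if $\pi$ is not the identity.
   Context: A permutation $\pi$ of $[n]$ is 321-avoiding if there are no $i<j<k$ with $\pi(k)<\pi(j)<\pi(i)$. *)

(* Defs.v *)
From mathcomp Require Import all_boot all_fingroup.
Set Implicit Arguments. Unset Strict Implicit. Unset Printing Implicit Defensive.

(* A permutation of [n] = {1,...,n} is modelled by s : 'S_n acting on
   'I_n = {0,...,n-1}; its 1-based value at k (1 <= k <= n) is pi1 s k. *)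
Definition pi1 {n} (s : 'S_n) (k : nat) : nat :=
  match insub k.-1 with Some i => (val (s i)).+1 | None => k end.

Definition avoids321 {n} (s : 'S_n) : bool :=
  [forall i : 'I_n, forall j : 'I_n, forall k : 'I_n,
     ~~ [&& i < j, j < k, s k < s j & s j < s i]].

Definition nfix {n} (s : 'S_n) : nat := #|[set i : 'I_n | s i == i]|.

Definition exc_locs {n} (s : 'S_n) : seq nat :=
  [seq k <- iota 1 n | k < pi1 s k].

(* Truncated nat subtraction in (i_j - pi(i_{j-1}) - 1) realises max(.,0);
   the other subtractions are nonnegative anyway. *)
Definition fix_formula {n} (s : 'S_n) : nat :=
  let e := exc_locs s in
  (head 0 e - 1)
  + \sum_(1 <= j < size e) (nth 0 e j - pi1 s (nth 0 e j.-1) - 1)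
  + (n - pi1 s (last 0 e)).

(* Main.v *)
Require Import Defs.
From mathcomp Require Import all_boot all_fingroup.
From mathcomp Require Import zify.

Set Implicit Arguments. Unset Strict Implicit. Unset Printing Implicit Defensive.

Lemma cnt_int lo a b m : a <= b ->
  count (fun k => ~~ (a <= k <= b)) (iota lo m) =
  (minn a (lo + m) - lo) + ((lo + m) - maxn b.+1 lo).
Proof.
move=> ab; elim: m lo => [|m IH] lo /=; first lia.
rewrite IH; case: (leqP a lo) => h1; case: (leqP lo b) => h2 /=; lia.
Qed.

Lemma cover_count (f : nat -> nat) N : forall t x lo,
  sorted ltn (x :: t) ->
  (forall i, i \in x :: t -> i < f i <= N) ->
  {in x :: t &, forall i j, i < j -> f i <= f j} ->
  lo <= x ->
  count (fun k => all (fun i => ~~ (i <= k <= f i)) (x :: t)) (iota lo (N.+1 - lo)) =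
  (x - lo) + \sum_(1 <= j < size (x :: t))
     (nth 0 (x :: t) j - f (nth 0 (x :: t) j.-1) - 1) + (N - f (last x t)).
Proof.
elim=> [|y t IH] x lo srt rng mono lox.
  rewrite big_geq //= addn0.
  have := rng x; rewrite inE eqxx => /(_ isT) hx.
  rewrite (@eq_count _ _ (fun k => ~~ (x <= k <= f x))); last by move=> k /=; rewrite andbT.
  rewrite cnt_int; lia.
have hx := rng x (mem_head _ _).
have hy : y < f y <= N by apply: rng; rewrite !inE eqxx orbT.
move: (srt) => /= /andP[xy srt'].
have fxy : f x <= f y by apply: mono; rewrite ?inE ?eqxx ?orbT.
have -> : N.+1 - lo = (y - lo) + (N.+1 - y) by lia.
rewrite iotaD count_cat.
have -> : lo + (y - lo) = y by lia.
have allge : forall i, i \in y :: t -> y <= i.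
  move=> i; rewrite inE => /orP[/eqP -> //|it].
  move: srt'; rewrite (path_sortedE ltn_trans) => /andP[/allP/(_ i it) /ltnW] //.
rewrite (@eq_in_count _ _ (fun k => ~~ (x <= k <= f x)) (iota lo (y - lo))); last first.
  move=> k; rewrite mem_iota => /andP[_ hk].
  have A : all (fun i => ~~ (i <= k <= f i)) (y :: t).
    apply/allP => i /allge hi; apply/negP => /andP[h _]; lia.
  by move: A => /= ->; rewrite andbT.
rewrite cnt_int; last lia.
rewrite (@eq_in_count _ _ (fun k => all (fun i => ~~ (i <= k <= f i)) (y :: t)) (iota y (N.+1 - y))); last first.
  move=> k; rewrite mem_iota => /andP[hk _].
  rewrite /= andb_idl // => /andP[h1 _].
  apply/negP => /andP[h3 h4]; move/negP: h1; apply; lia.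
rewrite IH //; first last.
- move=> i j hi hj; apply: mono; rewrite inE ?hi ?hj orbT //.
- by move=> i hi; apply: rng; rewrite inE hi orbT.
have -> : \sum_(1 <= j < size [:: x, y & t])
     (nth 0 [:: x, y & t] j - f (nth 0 [:: x, y & t] j.-1) - 1) =
   (y - f x - 1) + \sum_(1 <= j < size (y :: t))
     (nth 0 (y :: t) j - f (nth 0 (y :: t) j.-1) - 1).
  rewrite /= big_nat_recl //=; congr (_ + _).
  by apply: eq_big_nat; case=> [|j] //.
lia.
Qed.

Section Perm.
Variables (n : nat) (s : 'S_n).
Hypothesis av : avoids321 s.
Local Notation p := (pi1 s).

Lemma pi1E (i : 'I_n) : p i.+1 = (s i).+1.
Proof. by rewrite /pi1 /= valK. Qed.

Lemma ord_of k : 1 <= k <= n -> exists i : 'I_n, k = i.+1.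
Proof. move=> h; have h' : k.-1 < n by lia. exists (Ordinal h') => /=; lia. Qed.

Lemma prange k : 1 <= k <= n -> 1 <= p k <= n.
Proof. by move=> /ord_of [i ->]; rewrite pi1E /= ltn_ord. Qed.

Lemma pinj x y : 1 <= x <= n -> 1 <= y <= n -> p x = p y -> x = y.
Proof.
move=> /ord_of [i ->] /ord_of [j ->]; rewrite !pi1E => [[/val_inj/perm_inj ->]] //.
Qed.

Lemma av' a b c : 1 <= a -> a < b -> b < c -> c <= n -> ~~ (p c < p b < p a).
Proof.
move=> h1 h2 h3 h4.
have [i ei] : exists i : 'I_n, a = i.+1 by apply: ord_of; lia.
have [j ej] : exists j : 'I_n, b = j.+1 by apply: ord_of; lia.
have [k ek] : exists k : 'I_n, c = k.+1 by apply: ord_of; lia.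
subst; rewrite !pi1E !ltnS.
move: av => /forallP/(_ i)/forallP/(_ j)/forallP/(_ k).
apply: contra => /andP[-> ->]; rewrite andbT; apply/andP; split; lia.
Qed.

Lemma phole L lo hi : uniq L -> (forall x, x \in L -> 1 <= x <= n) ->
  (forall x, x \in L -> lo <= p x <= hi) -> size L <= hi.+1 - lo.
Proof.
move=> U R V.
have U' : uniq (map p L).
  rewrite map_inj_in_uniq // => x y hx hy; apply: pinj; by [apply: R].
have := @uniq_leq_size _ _ (iota lo (hi.+1 - lo)) U'.
rewrite size_map size_iota; apply=> _ /mapP[x hx ->]; rewrite mem_iota.
have := V x hx; lia.
Qed.

Lemma fixA i k : 1 <= i <= n -> i < p i -> 1 <= k <= n -> p k = k -> ~~ (i <= k <= p i).
Proof.
move=> hi ei hk fk; apply/negP => /andP[h1 h2].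
have ik : i < k.
  rewrite ltn_neqAle h1 andbT; apply/eqP => E; subst; lia.
have kpi : k < p i.
  rewrite ltn_neqAle h2 andbT; apply/eqP => E.
  have := pinj hk hi; rewrite fk -E => /(_ erefl) E'; lia.
case E: (has (fun m => p m < k) (iota k.+1 (n - k))).
  move/hasP: E => [m]; rewrite mem_iota => hm pm.
  have := @av' i k m; rewrite fk pm kpi; move/(_ ltac:(lia) ltac:(lia) ltac:(lia) ltac:(lia)) => //.
move/hasPn: E => E.
suff : size (i :: iota k.+1 (n - k)) <= n.+1 - k.+1 by rewrite /= size_iota; lia.
apply: phole.
- rewrite /= iota_uniq mem_iota andbT.
  have -> : (k.+1 <= i < k.+1 + (n - k)) = false by lia.
  by [].
- move=> x; rewrite inE mem_iota => /orP[/eqP -> |]; lia.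
- move=> x; rewrite inE => /orP[/eqP -> | xm].
    have := prange hi; lia.
  have := E x xm; move: xm; rewrite mem_iota => xm px.
  have hx : 1 <= x <= n by lia.
  have := prange hx; have : p x != k.
    by apply/eqP => pk; have := pinj hx hk; rewrite pk fk => /(_ erefl); lia.
  rewrite -leqNgt in px; lia.
Qed.

Lemma fixB k : 1 <= k <= n -> p k != k ->
  exists i, [/\ 1 <= i <= n, i < p i & i <= k <= p i].
Proof.
move=> hk nf.
case: (ltnP k (p k)) => kp.
  by exists k; split => //; rewrite leqnn ltnW.
have pk : p k < k by rewrite ltn_neqAle nf kp.
case E: (has (fun i => k <= p i) (iota 1 k)).
  move/hasP: E => [i]; rewrite mem_iota => hi ki.
  have ik : i != k by apply/eqP => e; subst; lia.
  exists i; split; lia.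
move/hasPn: E => E.
suff : size (iota 1 k) <= k.-1.+1 - 1 by rewrite size_iota; lia.
apply: phole.
- by rewrite iota_uniq.
- move=> x; rewrite mem_iota; lia.
- move=> x xm; have := E x xm; move: xm; rewrite mem_iota => xm px.
  have hx : 1 <= x <= n by lia.
  have := prange hx; rewrite -ltnNge in px; lia.
Qed.

Lemma monoC i j : 1 <= i <= n -> i < p i -> 1 <= j <= n -> j < p j -> i < j -> p i <= p j.
Proof.
move=> hi ei hj ej ij; rewrite leqNgt; apply/negP => pji.
case E: (has (fun m => p m < p j) (iota j.+1 (n - j))).
  move/hasP: E => [m]; rewrite mem_iota => hm pm.
  have := @av' i j m; rewrite pm pji; move/(_ ltac:(lia) ltac:(lia) ltac:(lia) ltac:(lia)) => //.
move/hasPn: E => E.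
suff : size [:: i, j & iota j.+1 (n - j)] <= n.+1 - p j by rewrite /= size_iota; lia.
apply: phole.
- rewrite /= iota_uniq andbT inE !mem_iota.
  have -> : (j.+1 <= i < j.+1 + (n - j)) = false by lia.
  have -> : (j.+1 <= j < j.+1 + (n - j)) = false by lia.
  have -> : (i == j) = false by lia.
  by [].
- move=> x; rewrite !inE mem_iota => /or3P[/eqP -> | /eqP -> |]; lia.
- move=> x; rewrite !inE => /or3P[/eqP -> | /eqP -> | xm].
  + have := prange hi; lia.
  + have := prange hj; lia.
  have := E x xm; move: xm; rewrite mem_iota => xm px.
  have hx : 1 <= x <= n by lia.
  have := prange hx; rewrite -leqNgt in px; lia.
Qed.

Lemma fixE k : 1 <= k <= n ->
  (p k == k) = all (fun i => ~~ (i <= k <= p i)) (exc_locs s).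
Proof.
move=> hk; rewrite /exc_locs; apply/idP/idP.
  move=> /eqP fk; apply/allP => i; rewrite mem_filter mem_iota => /andP[ei hi].
  apply: fixA => //; lia.
apply: contraLR => nf; have [i [hi ei ik]] := fixB hk nf.
apply/allPn; exists i; last by rewrite negbK.
rewrite mem_filter mem_iota ei /=; lia.
Qed.

Lemma nfixE : nfix s = count (fun k => p k == k) (iota 1 n).
Proof.
rewrite /nfix cardsE cardE /enum_mem size_filter -enumT.
have -> : iota 1 n = map (fun i : 'I_n => (val i).+1) (enum 'I_n).
  by rewrite (iotaDl 1 0) -val_enum_ord -map_comp.
rewrite count_map; apply: eq_count => i /=.
by rewrite pi1E eqSS.
Qed.

End Perm.

Theorem mainTheorem12 (n : nat) (s : 'S_n) :
  avoids321 s ->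
  (s = 1%g -> nfix s = n) /\
  (s <> 1%g -> nfix s = fix_formula s).
Proof.
move=> av; split.
  move=> ->; rewrite /nfix.
  have -> : [set i : 'I_n | (1%g : 'S_n) i == i] = setT.
    by apply/setP => i; rewrite !inE perm1 eqxx.
  by rewrite cardsT card_ord.
move=> ns.
rewrite nfixE.
case E: (exc_locs s) => [|x t].
  exfalso; apply: ns; apply/permP => i; rewrite perm1.
  have : pi1 s i.+1 == i.+1 by rewrite fixE // ?E //; have := ltn_ord i; lia.
  by rewrite pi1E eqSS => /eqP /val_inj.
rewrite (@eq_in_count _ _ (fun k => all (fun i => ~~ (i <= k <= pi1 s i)) (x :: t))); last first.
  by move=> k; rewrite mem_iota -E => hk; apply: fixE => //; lia.
have := @cover_count (pi1 s) n t x 1.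
rewrite subSS subn0 /fix_formula E /= => -> //.
- move: (sorted_filter ltn_trans (fun k => k < pi1 s k) (iota_ltn_sorted 1 n)).
  by rewrite -/(exc_locs s) E.
- move=> i; rewrite -E mem_filter mem_iota => /andP[ei hi]; rewrite ei /=.
  have hi' : 1 <= i <= n by lia.
  have := prange av hi'; lia.
- move=> i j; rewrite -E !mem_filter !mem_iota => /andP[ei hi] /andP[ej hj] ij.
  apply: monoC => //; lia.
- move: (mem_head x t); rewrite -E mem_filter mem_iota; lia.
Qed.
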